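(* Let $N_r,N_t,L$ be positive integers with $L\le\min\{N_r,N_t\}$, and let $\mathbf{H}\in\mathbb{C}^{N_r\times N_t}$, $\mathbf{H}\neq\mathbf{0}$, be a channel matrix of the form $\mathbf{H} = \sqrt{\tfrac{N_r N_t}{L}}\sum_{l=1}^{L} h_l\, \mathbf{a}_r(\theta_{r,l})\, \mathbf{a}_t(\theta_{t,l})^H$, with $\mathbf{H}=\mathbf{U}\boldsymbol{\Sigma}\mathbf{V}^H$ where $\mathbf{U}\in\mathbb{C}^{N_r\times L}$ and $\mathbf{V}\in\mathbb{C}^{N_t\times L}$ consist of the $L$ dominant left and right singular vectors of $\mathbf{H}$ and $\boldsymbol{\Sigma}\in\mathbb{R}^{L\times L}$ is diagonal with the $L$ largest singular values. Let $\widehat{\mathbf{U}}\in\mathbb{C}^{N_r\times L}$ and $\widehat{\mathbf{V}}\in\mathbb{C}^{N_t\times L}$ be the estimated column and row subspace matrices (each with orthonormal columns) produced by the two-stage procedure: $\widehat{\mathbf{U}}$ is the matrix of $L$ dominant left singular vectors of a noisy observation $\mathbf{Y}_S$ of the first $m$ columns of $\mathbf{H}$, and $\widehat{\mathbf{V}}$ is the matrix of $L$ dominant right singular vectors of the observation matrix $\widehat{\mathbf{Q}}$ of $\mathbf{H}$ taken through the combiner. Suppose the combiner and precoder equal these matrices exactly: $\widehat{\mathbf{W}}=\widehat{\mathbf{U}}$ and $\widehat{\mathbf{F}}=\widehat{\mathbf{V}}$. Then $$\eta(\widehat{\mathbf{W}},\widehat{\mathbf{F}}) := \frac{\|\widehat{\mathbf{W}}^H\mathbf{H}\widehat{\mathbf{F}}\|_F^2}{\operatorname{tr}(\mathbf{H}^H\mathbf{H})}\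 \ge\ \sigma_L^2(\widehat{\mathbf{U}}^H\mathbf{U})\,\sigma_L^2(\widehat{\mathbf{V}}^H\mathbf{V}).$$
   Context: $\mathbf{a}_r(\theta) = \frac{1}{\sqrt{N_r}}[1, e^{-j\pi\sin\theta}, \dots, e^{-j\pi (N_r-1)\sin\theta}]^T$, $\mathbf{a}_t(\theta) = \frac{1}{\sqrt{N_t}}[1, e^{-j\pi\sin\theta}, \dots, e^{-j\pi (N_t-1)\sin\theta}]^T$, $h_l\in\mathbb{C}$, $\theta_{r,l},\theta_{t,l}\in[-\pi/2,\pi/2)$; such $\mathbf{H}$ has rank at most $L$. $\sigma_L(\mathbf{X})$ denotes the $L$-th largest singular value of $\mathbf{X}$. *)

(* Defs.v *)
From HB Require Import structures.
From mathcomp Require Import all_boot all_order all_algebra.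
From mathcomp Require Import complex.
From mathcomp Require Import reals trigo.
Set Implicit Arguments. Unset Strict Implicit. Unset Printing Implicit Defensive.
Import Order.TTheory GRing.Theory Num.Theory.
Local Open Scope ring_scope.
Local Open Scope complex_scope.

Section Defs.
Variable R : realType.
Local Notation C := R[i].

Definition mxH m n (A : 'M[C]_(m, n)) : 'M[C]_(n, m) :=
  (map_mx (fun z : C => Num.conj z) A)^T.

Definition rdiag m n (s : seq C) : 'M[C]_(m, n) :=
  \matrix_(i < m, j < n) (if (i : nat) == j then s`_i else 0).

Definition is_svd m n (X : 'M[C]_(m, n)) (P : 'M[C]_m) (s : seq C) (Q : 'M[C]_n) :=
  [/\ mxH P *m P = 1%:M, mxH Q *m Q = 1%:M,
      size s = minn m n,
      all (fun x => 0 <= x) s /\ sorted (fun x y => y <= x) s &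
      X = P *m rdiag m n s *m mxH Q].

Definition singular_values m n (X : 'M[C]_(m, n)) (s : seq C) :=
  exists P Q, is_svd X P s Q.

Definition dominant_left m n L (Y : 'M[C]_(m, n)) (Uh : 'M[C]_(m, L)) :=
  (L <= m)%N /\ exists P s Q, is_svd Y P s Q /\
    forall i (j : 'I_L) (k : 'I_m), (k : nat) = j -> Uh i j = P i k.

Definition dominant_right m n L (Y : 'M[C]_(m, n)) (Vh : 'M[C]_(n, L)) :=
  (L <= n)%N /\ exists P s Q, is_svd Y P s Q /\
    forall i (j : 'I_L) (k : 'I_n), (k : nat) = j -> Vh i j = Q i k.

Definition frob2 m n (A : 'M[C]_(m, n)) : C :=
  \sum_i \sum_j `|A i j| ^+ 2.

(* array response vector a(theta) of an N-element ULA *)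
Definition steer (N : nat) (th : R) : 'cV[C]_N :=
  \col_(k < N) ((Num.sqrt (N%:R : R))^-1%:C *
     ((cos (pi * k%:R * sin th)) -i* (sin (pi * k%:R * sin th)))).

Definition eta Nr Nt L (W : 'M[C]_(Nr, L)) (H : 'M[C]_(Nr, Nt)) (F : 'M[C]_(Nt, L)) : C :=
  frob2 (mxH W *m H *m F) / \tr (mxH H *m H).

End Defs.

(* Main.v *)
From HB Require Import structures.
From mathcomp Require Import all_boot all_order all_algebra.
From mathcomp Require Import complex.
From mathcomp Require Import reals trigo.
Require Import Defs.
From mathcomp Require Import zify.
Import Order.TTheory GRing.Theory Num.Theory.
Local Open Scope ring_scope.
Local Open Scope complex_scope.

Section Aux.
Variable R : realType.
Local Notation C := R[i].

Lemma mxH_mul m n p (A : 'M[C]_(m, n)) (B : 'M[C]_(n, p)) :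
  mxH (A *m B) = mxH B *m mxH A.
Proof. by rewrite /mxH map_mxM trmx_mul. Qed.

Lemma mxHK m n (A : 'M[C]_(m, n)) : mxH (mxH A) = A.
Proof. by apply/matrixP => i j; rewrite /mxH !mxE conjCK. Qed.

Lemma frob2_tr m n (X : 'M[C]_(m, n)) : frob2 X = \tr (mxH X *m X).
Proof.
rewrite /frob2 /mxtrace exchange_big /=; apply: eq_bigr => j _.
rewrite !mxE; apply: eq_bigr => i _; rewrite /mxH !mxE normCK mulrC.
by [].
Qed.

Lemma frob2_ge0 m n (X : 'M[C]_(m, n)) : 0 <= frob2 X.
Proof. by apply: sumr_ge0 => i _; apply: sumr_ge0 => j _; apply: exprn_ge0. Qed.

Lemma frob2_mxH m n (X : 'M[C]_(m, n)) : frob2 (mxH X) = frob2 X.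
Proof.
rewrite /frob2 exchange_big /=; apply: eq_bigr => i _; apply: eq_bigr => j _.
by rewrite /mxH !mxE norm_conjC.
Qed.

Lemma frob2_unit m n k (P : 'M[C]_(m, n)) (W : 'M[C]_(n, k)) :
  mxH P *m P = 1%:M -> frob2 (P *m W) = frob2 W.
Proof.
move=> hP; rewrite !frob2_tr mxH_mul -mulmxA (mulmxA (mxH P)) hP mul1mx.
by [].
Qed.

Lemma frob2_eq0 m n (X : 'M[C]_(m, n)) : frob2 X = 0 -> X = 0.
Proof.
move=> /eqP; rewrite psumr_eq0; last by move=> i _; apply: sumr_ge0 => j _; apply: exprn_ge0.
move=> /allP h; apply/matrixP => i j; rewrite mxE.
have := h i (mem_index_enum i); rewrite /= psumr_eq0; last by move=> *; apply: exprn_ge0.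
move=> /allP h2; have := h2 j (mem_index_enum j).
by rewrite /= expf_eq0 /= normr_eq0 => /eqP.
Qed.

Lemma rdiag_mul n k (s : seq C) (Z : 'M[C]_(n, k)) i j :
  (rdiag n n s *m Z) i j = s`_i * Z i j.
Proof.
rewrite mxE (bigD1 i) //= big1 ?addr0; first by rewrite /rdiag mxE eqxx.
move=> l hl; rewrite /rdiag mxE ifF ?mul0r //.
apply: contraNF hl => /eqP h; apply/eqP/val_inj.
by [].
Qed.

Lemma svd_min_nonneg n (X : 'M[C]_n) P s Q :
  is_svd X P s Q -> 0 <= s`_n.-1 /\ forall i : 'I_n, s`_n.-1 <= s`_i.
Proof.
case=> _ _ hs [hall hsort] _.
have ge0 : forall k, 0 <= s`_k.
  move=> k; case: (ltnP k (size s)) => hk; first by apply: (all_nthP 0 hall).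
  by rewrite nth_default.
split => // i.
have := @sorted_leq_nth _ (fun x y : C => y <= x) _ _ 0 s hsort i n.-1.
apply.
- by move=> a b c /= h1 h2; apply: le_trans h1.
- by move=> a /=.
- by rewrite inE hs minnn.
- have hi := ltn_ord i; rewrite inE hs minnn /=; lia.
- have hi := ltn_ord i; lia.
Qed.

Lemma frob2_svd_lb n k (X : 'M[C]_n) P s Q (Y : 'M[C]_(n, k)) :
  is_svd X P s Q -> s`_n.-1 ^+ 2 * frob2 Y <= frob2 (X *m Y).
Proof.
move=> hsvd; have [h0 hmin] := @svd_min_nonneg _ _ _ _ _ hsvd.
case: hsvd => hP hQ _ _ ->.
rewrite -!mulmxA frob2_unit //.
have hQ' : mxH (mxH Q) *m mxH Q = 1%:M by rewrite mxHK; apply: mulmx1C.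
rewrite -(@frob2_unit _ _ _ _ Y hQ') /frob2 mulr_sumr; apply: ler_sum => i _.
rewrite mulr_sumr; apply: ler_sum => j _.
rewrite rdiag_mul normrM exprMn ler_wpM2r ?exprn_ge0 //.
rewrite ler_pXn2r // ?inE ?normr_ge0 //= ger0_norm //; last exact: le_trans (hmin i).
Qed.
End Aux.

Theorem lemma3 (R : realType) (Nr Nt L : nat)
  (hNr : (0 < Nr)%N) (hNt : (0 < Nt)%N) (hL0 : (0 < L)%N)
  (hL : (L <= minn Nr Nt)%N)
  (h : 'I_L -> R[i]) (thr tht : 'I_L -> R)
  (hthr : forall l, - (pi / 2) <= thr l < pi / 2)
  (htht : forall l, - (pi / 2) <= tht l < pi / 2)
  (H : 'M[R[i]]_(Nr, Nt))
  (hH : H = (Num.sqrt ((Nr * Nt)%:R / L%:R : R))%:C *: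
             \sum_(l < L) (h l *: (steer Nr (thr l) *m mxH (steer Nt (tht l)))))
  (hH0 : H != 0)
  (sH : seq R[i]) (hsH : singular_values H sH)
  (U : 'M[R[i]]_(Nr, L)) (V : 'M[R[i]]_(Nt, L))
  (hU : mxH U *m U = 1%:M) (hV : mxH V *m V = 1%:M)
  (hSVD : H = U *m rdiag L L sH *m mxH V)
  (m : nat) (hm : (m <= Nt)%N) (NS : 'M[R[i]]_(Nr, m)) (YS : 'M[R[i]]_(Nr, m))
  (hYS : YS = colsub (fun j : 'I_m => widen_ord hm j) H + NS)
  (Uh : 'M[R[i]]_(Nr, L)) (hUh : dominant_left YS Uh)
  (NQ : 'M[R[i]]_(L, Nt)) (Qh : 'M[R[i]]_(L, Nt))
  (hQh : Qh = mxH Uh *m H + NQ)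
  (Vh : 'M[R[i]]_(Nt, L)) (hVh : dominant_right Qh Vh)
  (Wh : 'M[R[i]]_(Nr, L)) (Fh : 'M[R[i]]_(Nt, L))
  (hW : Wh = Uh) (hF : Fh = Vh)
  (sU sV : seq R[i])
  (hsU : singular_values (mxH Uh *m U) sU)
  (hsV : singular_values (mxH Vh *m V) sV) :
  sU`_(L.-1) ^+ 2 * sV`_(L.-1) ^+ 2 <= eta Wh H Fh.
Proof.
subst Wh Fh; rewrite /eta -frob2_tr.
set S := rdiag L L sH.
have hFH : frob2 H = frob2 S.
  rewrite hSVD -mulmxA frob2_unit // -(@frob2_mxH R _ _ (S *m mxH V)) mxH_mul mxHK.
  by rewrite frob2_unit // frob2_mxH.
have hpos : 0 < frob2 H.
  rewrite lt_def frob2_ge0 andbT; apply/eqP => /frob2_eq0 h0.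
  by move: hH0; rewrite h0 eqxx.
rewrite ler_pdivlMr // hFH.
case: hsU => PU [QU hsvdU]; case: hsV => PV [QV hsvdV].
have [hA0 _] := @svd_min_nonneg R _ _ _ _ _ hsvdU.
have hM : mxH Uh *m H *m Vh = (mxH Uh *m U) *m (S *m mxH V *m Vh).
  by rewrite hSVD !mulmxA.
rewrite hM; apply: le_trans (@frob2_svd_lb R _ _ _ _ _ _ _ hsvdU).
rewrite -mulrA ler_wpM2l ?exprn_ge0 //.
rewrite -(@frob2_mxH R _ _ (S *m mxH V *m Vh)) !mxH_mul mxHK mulmxA -(@frob2_mxH R _ _ (S)).
exact: (@frob2_svd_lb R L L _ _ _ _ (mxH S) hsvdV).
Qed.
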